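(* In the single-block Spice setting, fix an iteration $k$ and let $w^*=(x^*,\lambda^* )\in\Omega$ satisfy $\rho[f(x)-f(x^* )]+(w-w^* )^\top\frac{1}{\eta_k}\Gamma(w^* )\ge 0$ for all $w\in\Omega$. Then $$\|w^*-w^k\|_{H_k}^2\ \ge\ \|w^*-w^{k+1}\|_{H_k}^2+\|w^k-\bar w^k\|_{G_k}^2 .$$
   Context: Single-block Spice setting. Let $\mathcal{X}\subseteq\mathbb{R}^n$ be nonempty closed convex, $f:\mathbb{R}^n\to\mathbb{R}$ convex, $\phi_1,\dots,\phi_p:\mathbb{R}^n\to\mathbb{R}$ convex and continuously differentiable, $\Phi(x)=(\phi_1(x),\dots,\phi_p(x))^\top$, $\mathcal{D}\Phi(x)\in\mathbb{R}^{p\times n}$ its Jacobian. Let $\mathcal{Z}=\mathbb{R}^p_+$, $\Omega=\mathcal{X}\times\mathcal{Z}$, $w=(x,\lambda)$, $\Gamma(w)=(\mathcal{D}\Phi(x)^\top\lambda,\,-\Phi(x))$. For a symmetric matrix $A$, $\|v\|_A^2:=v^\top A v$; the norm of a matrix is the spectral norm; $\mathsf{R}(x):=\|\mathcal{D}\Phi(x)\|^2$. The scaled Lagrangian is $\mathcal{L}(x,\lambda,\rho,\eta)=\rho f(x)+\frac1\eta\lambda^\top\Phi(x)$. Fix $\rho>0$, $\mu>1$, a starting point $w^0=(x^0,\lambda^0)\in\Omega$ and positive numbers $\eta_0,\eta_1,\dots$. Given $w^k=(x^k,\lambda^k)\in\Omega$, iteration $k$ is: $r_k=\frac{1}{\eta_k}\sqrt{\mathsf{R}(x^k)}$;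 $\bar x^k=\arg\min_{x\in\mathcal{X}}\{\mathcal{L}(x,\lambda^k,\rho,\eta_k)+\frac{r_k}{2}\|x-x^k\|^2\}$; $s_k=\frac{\mu\,\mathsf{R}(\bar x^k)}{\eta_k\sqrt{\mathsf{R}(x^k)}}$; $\bar\lambda^k=\arg\max_{\lambda\in\mathcal{Z}}\{\mathcal{L}(\bar x^k,\lambda,\rho,\eta_k)-\frac{s_k}{2}\|\lambda-\lambda^k\|^2\}$ (equivalently $\bar\lambda^k=\max\{\lambda^k+\frac{1}{\eta_k s_k}\Phi(\bar x^k),0\}$ componentwise); $\bar w^k=(\bar x^k,\bar\lambda^k)$; and $w^{k+1}=w^k-M_k(w^k-\bar w^k)$ where $M_k=\begin{pmatrix}I_n & -\frac{1}{\eta_k r_k}\mathcal{D}\Phi(\bar x^k)^\top\\ 0 & I_p\end{pmatrix}$. It is assumed throughout that $\mathsf{R}(x^k)>0$ and $\mathsf{R}(\bar x^k)>0$ for all $k$. Define $Q_k=\begin{pmatrix} r_kI_n & -\frac{1}{\eta_k}\mathcal{D}\Phi(\bar x^k)^\top\\ 0 & s_kI_p\end{pmatrix}$, $H_k=\begin{pmatrix} r_kI_n&0\\0&s_kI_p\end{pmatrix}$, $G_k=\begin{pmatrix} r_kI_n&0\\0&s_kI_p-\frac{1}{\eta_k^2r_k}\mathcal{D}\Phi(\bar x^k)\mathcal{D}\Phi(\bar x^k)^\top\end{pmatrix}$. *)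

(* Defs.v *)
From HB Require Import structures.
From mathcomp Require Import all_boot all_order all_algebra.
From mathcomp Require Import all_classical all_reals all_analysis.
Set Implicit Arguments. Unset Strict Implicit. Unset Printing Implicit Defensive.
Import Order.TTheory GRing.Theory Num.Theory.
Import numFieldNormedType.Exports.
Local Open Scope classical_set_scope.
Local Open Scope ring_scope.

Section SpiceDefs.
Variable R : realType.

Definition qform (m : nat) (A : 'M[R]_m) (v : 'cV[R]_m) : R :=
  (v^T *m A *m v) 0 0.

Definition dotv (m : nat) (u v : 'cV[R]_m) : R := (u^T *m v) 0 0.
Definition sqnorm (m : nat) (v : 'cV[R]_m) : R := dotv v v.
Definition enorm (m : nat) (v : 'cV[R]_m) : R := Num.sqrt (sqnorm v).

Definition specnorm (p n : nat) (A : 'M[R]_(p, n)) : R :=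
  sup [set enorm (A *m v) | v in [set v : 'cV[R]_n | enorm v <= 1]].

Definition C1_with_jacobian (n p : nat) (Phi : 'cV[R]_n -> 'cV[R]_p)
  (DPhi : 'cV[R]_n -> 'M[R]_(p, n)) : Prop :=
  (forall x, differentiable Phi x /\ ('d Phi x : 'cV[R]_n -> 'cV[R]_p) =1 (fun h => DPhi x *m h))
  /\ continuous DPhi.

Definition nonneg_orthant (p : nat) : set 'cV[R]_p :=
  [set l | forall i, 0 <= l i 0].

Definition scaledL (n p : nat) (f : 'cV[R]_n -> R) (Phi : 'cV[R]_n -> 'cV[R]_p)
  (x : 'cV[R]_n) (l : 'cV[R]_p) (rho eta : R) : R :=
  rho * f x + eta^-1 * dotv l (Phi x).

Definition Gamma (n p : nat) (Phi : 'cV[R]_n -> 'cV[R]_p)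
  (DPhi : 'cV[R]_n -> 'M[R]_(p, n)) (x : 'cV[R]_n) (l : 'cV[R]_p) : 'cV[R]_(n + p) :=
  col_mx ((DPhi x)^T *m l) (- Phi x).

Definition Rfun (n p : nat) (DPhi : 'cV[R]_n -> 'M[R]_(p, n)) (x : 'cV[R]_n) : R :=
  specnorm (DPhi x) ^+ 2.

End SpiceDefs.

(* Main.v *)
Require Import Defs.
From HB Require Import structures.
From mathcomp Require Import all_boot all_order all_algebra.
From mathcomp Require Import all_classical all_reals all_analysis.
From mathcomp Require Import ring lra.
Import Order.TTheory GRing.Theory Num.Theory.
Import numFieldNormedType.Exports.
Local Open Scope classical_set_scope.
Local Open Scope ring_scope.

Section H.
Variable R : realType.

Lemma dotvE m (u v : 'cV[R]_m) : dotv u v = \sum_i u i 0 * v i 0.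
Proof. by rewrite /dotv !mxE; apply: eq_bigr => i _; rewrite mxE. Qed.

Lemma dotvC m (u v : 'cV[R]_m) : dotv u v = dotv v u.
Proof. by rewrite !dotvE; apply: eq_bigr => i _; rewrite mulrC. Qed.

Lemma dotvDr m (u v w : 'cV[R]_m) : dotv u (v + w) = dotv u v + dotv u w.
Proof. by rewrite !dotvE -big_split; apply: eq_bigr => i _; rewrite mxE mulrDr. Qed.
Lemma dotvDl m (u v w : 'cV[R]_m) : dotv (v + w) u = dotv v u + dotv w u.
Proof. by rewrite dotvC dotvDr !(dotvC _ u). Qed.
Lemma dotvZr m a (u v : 'cV[R]_m) : dotv u (a *: v) = a * dotv u v.
Proof. by rewrite !dotvE mulr_sumr; apply: eq_bigr => i _; rewrite mxE mulrCA. Qed.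
Lemma dotvZl m a (u v : 'cV[R]_m) : dotv (a *: v) u = a * dotv v u.
Proof. by rewrite dotvC dotvZr dotvC. Qed.
Lemma dotvNr m (u v : 'cV[R]_m) : dotv u (- v) = - dotv u v.
Proof. by rewrite -scaleN1r dotvZr mulN1r. Qed.
Lemma dotvNl m (u v : 'cV[R]_m) : dotv (- v) u = - dotv v u.
Proof. by rewrite dotvC dotvNr dotvC. Qed.
Lemma dotvBr m (u v w : 'cV[R]_m) : dotv u (v - w) = dotv u v - dotv u w.
Proof. by rewrite dotvDr dotvNr. Qed.
Lemma dotvBl m (u v w : 'cV[R]_m) : dotv (v - w) u = dotv v u - dotv w u.
Proof. by rewrite dotvDl dotvNl. Qed.
Lemma dotv_tr m k (M : 'M[R]_(k, m)) (a : 'cV[R]_m) (v : 'cV[R]_k) :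
  dotv a (M^T *m v) = dotv v (M *m a).
Proof. by rewrite [RHS]dotvC /dotv trmx_mul mulmxA. Qed.
Lemma dotv_col m k (u u' : 'cV[R]_m) (v v' : 'cV[R]_k) :
  dotv (col_mx u v) (col_mx u' v') = dotv u u' + dotv v v'.
Proof. by rewrite /dotv tr_col_mx mul_row_col mxE. Qed.

Lemma qform_block m k (A : 'M[R]_m) (B : 'M[R]_k) u v :
  qform (block_mx A 0 0 B) (col_mx u v) = qform A u + qform B v.
Proof.
by rewrite /qform tr_col_mx mul_row_block !mulmx0 !addr0 !add0r mul_row_col mxE.
Qed.
Lemma qform_scal m a (u : 'cV[R]_m) : qform a%:M u = a * dotv u u.
Proof. by rewrite /qform mul_mx_scalar -scalemxAl mxE. Qed.
Lemma qform_sub m a k (M : 'M[R]_m) u : qform (a%:M - k *: M) u = a * dotv u u - k * qform M u.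
Proof.
have -> : qform (a%:M - k *: M) u = qform a%:M u - k * qform M u.
  by rewrite /qform mulmxBr mulmxBl -scalemxAr -scalemxAl !mxE.
by rewrite qform_scal.
Qed.
Lemma qform_DDt m k (D : 'M[R]_(k, m)) v : qform (D *m D^T) v = dotv (D^T *m v) (D^T *m v).
Proof. by rewrite /qform /dotv trmx_mul trmxK !mulmxA. Qed.
Lemma lim_ge (g : R -> R) (L c K : R) : g @ 0^'+ --> L ->
  (forall t, 0 < t <= 1 -> c <= g t + K * t) -> c <= L.
Proof.
move=> gL H.
have G : (fun t => g t + K * t) @ 0^'+ --> L + K * 0.
  apply: cvgD => //; apply: cvgM; first exact: cvg_cst.
  by apply: cvg_at_right_filter; exact: cvg_id.
rewrite mulr0 addr0 in G.
apply: (closed_cvg (fun y => c <= y)) G; first exact: closed_ge.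
near=> t; apply: H; apply/andP; split.
  by near: t; exact: nbhs_right_gt.
by near: t; apply: nbhs_right_le; exact: ltr01.
Unshelve. all: by end_near.
Qed.
Lemma lim_le (g : R -> R) (L c K : R) : g @ 0^'+ --> L ->
  (forall t, 0 < t <= 1 -> g t <= c + K * t) -> L <= c.
Proof.
move=> gL H; rewrite -lerN2; apply: (@lim_ge (fun t => - g t) _ _ K).
  exact: cvgN.
by move=> t /H; rewrite -lerN2 opprD => h; rewrite -lerBlDr (le_trans h) // lerBlDr.
Qed.
Lemma dotv_cont m (l : 'cV[R]_m) : continuous (fun v : 'cV[R]_m => dotv l v).
Proof.
have -> : dotv l = (fun v => \sum_i (l i 0 * v i 0)).
  by apply/funext => v; rewrite dotvE.
apply: continuous_big => [|i _]; first exact: add_continuous.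
move=> v; apply: continuous_comp; first exact: coord_continuous.
exact: mulrl_continuous.
Qed.

Lemma dirder n p (Phi : 'cV[R]_n -> 'cV[R]_p) (DPhi : 'cV[R]_n -> 'M[R]_(p,n))
  x h (l : 'cV[R]_p) :
  differentiable Phi x -> ('d Phi x : 'cV[R]_n -> 'cV[R]_p) =1 (fun h => DPhi x *m h) ->
  (fun t : R => t^-1 * (dotv l (Phi (t *: h + x)) - dotv l (Phi x))) @ 0^'+
    --> dotv l (DPhi x *m h).
Proof.
move=> dP dE.
have H : (fun t : R => t^-1 *: (Phi (t *: h + x) - Phi x)) @ 0^' --> DPhi x *m h.
  rewrite -dE -deriveE //; have := diff_derivable (v:=h) dP; rewrite /derivable.
  move=> hh; idtac. exact: hh.

have H' : (fun t : R => t^-1 *: (Phi (t *: h + x) - Phi x)) @ 0^'+ --> DPhi x *m h.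
  apply: cvg_trans H; apply: cvg_app; apply: within_subset => y /=.
  exact: lt0r_neq0.
have := continuous_cvg _ (@dotv_cont p l (DPhi x *m h)) H'.
set q := (fun t : R => t^-1 *: (Phi (t *: h + x) - Phi x)).
have E : (fun t : R => t^-1 * (dotv l (Phi (t *: h + x)) - dotv l (Phi x))) = dotv l \o q.
  by apply/funext => t; rewrite /q /= dotvZr dotvBr.
move=> HH. rewrite E. exact: HH.
Qed.
Lemma sq_exp m t (a c : 'cV[R]_m) :
  sqnorm (t *: a + c) = t * t * dotv a a + 2 * t * dotv a c + sqnorm c.
Proof. rewrite /sqnorm dotvDl !dotvDr !dotvZl !dotvZr (dotvC _ c a); ring. Qed.

Lemma sqB m (x y : 'cV[R]_m) :
  dotv (x - y) (x - y) = dotv x x - 2 * dotv x y + dotv y y.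
Proof. rewrite dotvBl !dotvBr (dotvC _ y x); ring. Qed.

Lemma fin_vec m k (a u w : 'cV[R]_m) (b v : 'cV[R]_k) (r s eta : R) :
  0 < r -> 0 < eta ->
  0 <= - (r * dotv a u) - s * dotv b v + eta^-1 * dotv a w ->
  r * dotv (a - (eta * r)^-1 *: w) (a - (eta * r)^-1 *: w) + s * dotv b b
  + (r * dotv u u + (s * dotv v v - (eta ^+ 2 * r)^-1 * dotv w w))
  <= r * dotv (a - u) (a - u) + s * dotv (b - v) (b - v).
Proof.
move=> r0 e0 Q; rewrite !sqB !dotvZl !dotvZr.
rewrite -subr_ge0.
set L := (X in 0 <= X).
have -> : L = 2 * (- (r * dotv a u) - s * dotv b v + eta^-1 * dotv a w).
  by rewrite /L; field; rewrite !gt_eqF.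
lra.
Qed.

Lemma grad_ineq n p (Phi : 'cV[R]_n -> 'cV[R]_p) (DPhi : 'cV[R]_n -> 'M[R]_(p,n))
  (x y : 'cV[R]_n) (l : 'cV[R]_p) :
  (forall i : 'I_p, convex_function setT (fun x => Phi x i 0)) ->
  differentiable Phi x -> ('d Phi x : 'cV[R]_n -> 'cV[R]_p) =1 (fun h => DPhi x *m h) ->
  nonneg_orthant l ->
  dotv l (DPhi x *m (y - x)) <= dotv l (Phi y) - dotv l (Phi x).
Proof.
move=> cvx dP dE l0.
apply: (lim_le _ _ _ 0 (@dirder _ _ Phi DPhi x (y - x) l dP dE)) => t /andP[t0 t1].
have key : dotv l (Phi (t *: (y - x) + x)) <= t * dotv l (Phi y) + (1 - t) * dotv l (Phi x).
  rewrite !dotvE mulr_sumr mulr_sumr -big_split /=; apply: ler_sum => i _.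
  set T : {i01 R} := Itv01 (ltW t0) t1.
  have c := cvx i T y x (mem_set I) (mem_set I).
  have e : t *: (y - x) + x = T%:num *: y + (1 - T%:num) *: x.
    by apply/matrixP => a b; rewrite /= !mxE; ring.
  rewrite e.
  have c' : Phi (T%:num *: y + (1 - T%:num) *: x) i 0 <= T%:num * Phi y i 0 + (1 - T%:num) * Phi x i 0.
    exact: c.
  have li := l0 i; rewrite /= in c'.
  nra.
rewrite mul0r addr0 mulrC ler_pdivrMr //.
nra.
Qed.
End H.

Theorem theorem3p1 (R : realType) (n p : nat)
  (X : set 'cV[R]_n) (f : 'cV[R]_n -> R)
  (Phi : 'cV[R]_n -> 'cV[R]_p) (DPhi : 'cV[R]_n -> 'M[R]_(p, n))
  (rho mu eta : R)
  (xk : 'cV[R]_n) (lk : 'cV[R]_p)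
  (xbar : 'cV[R]_n) (lbar : 'cV[R]_p)
  (xs : 'cV[R]_n) (ls : 'cV[R]_p) :
  (* standing assumptions *)
  X !=set0 -> closed X -> convex_set X ->
  convex_function setT f ->
  (forall i : 'I_p, convex_function setT (fun x => Phi x i 0)) ->
  C1_with_jacobian Phi DPhi ->
  0 < rho -> 1 < mu -> 0 < eta ->
  (* current iterate w^k in Omega *)
  X xk -> nonneg_orthant lk ->
  0 < Rfun DPhi xk ->
  let rk := eta^-1 * Num.sqrt (Rfun DPhi xk) in
  (* xbar^k is the argmin of the primal subproblem *)
  X xbar ->
  (forall x, X x ->
     scaledL f Phi xbar lk rho eta + rk / 2 * sqnorm (xbar - xk)
     <= scaledL f Phi x lk rho eta + rk / 2 * sqnorm (x - xk)) ->
  0 < Rfun DPhi xbar ->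
  let sk := mu * Rfun DPhi xbar / (eta * Num.sqrt (Rfun DPhi xk)) in
  (* lbar^k is the argmax of the dual subproblem *)
  nonneg_orthant lbar ->
  (forall l, nonneg_orthant l ->
     scaledL f Phi xbar l rho eta - sk / 2 * sqnorm (l - lk)
     <= scaledL f Phi xbar lbar rho eta - sk / 2 * sqnorm (lbar - lk)) ->
  let wk : 'cV[R]_(n + p) := col_mx xk lk in
  let wbar : 'cV[R]_(n + p) := col_mx xbar lbar in
  let Mk : 'M[R]_(n + p) :=
    block_mx 1%:M (- (eta * rk)^-1 *: (DPhi xbar)^T) 0 1%:M in
  let wk1 : 'cV[R]_(n + p) := wk - Mk *m (wk - wbar) in
  let Hk : 'M[R]_(n + p) := block_mx (rk%:M) 0 0 (sk%:M) in
  let Gk : 'M[R]_(n + p) :=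
    block_mx (rk%:M) 0 0
      (sk%:M - (eta ^+ 2 * rk)^-1 *: (DPhi xbar *m (DPhi xbar)^T)) in
  (* ws = (xs, ls) in Omega solves the variational inequality *)
  X xs -> nonneg_orthant ls ->
  let ws : 'cV[R]_(n + p) := col_mx xs ls in
  (forall x l, X x -> nonneg_orthant l ->
     0 <= rho * (f x - f xs)
          + dotv (col_mx x l - ws) (eta^-1 *: Gamma Phi DPhi xs ls)) ->
  qform Hk (ws - wk) >= qform Hk (ws - wk1) + qform Gk (wk - wbar).
Proof.
move=> X0 clX cvX cvf cvP [dPhi _] rho0 mu1 eta0 Xxk lk0 Rk0 rk Xxbar argmin Rb0 sk
  lbar0 argmax wk wbar Mk wk1 Hk Gk Xxs ls0 ws VI.
have ei0 : 0 < eta^-1 by rewrite invr_gt0.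
have r0 : 0 < rk by rewrite /rk mulr_gt0 // sqrtr_gt0.
set D := DPhi xbar.
set a := xs - xbar.
set b := ls - lbar.
(* primal optimality (first order) *)
have P1 : 0 <= rho * (f xs - f xbar) + eta^-1 * dotv lk (D *m a)
              + rk * dotv a (xbar - xk).
  have dd := @dirder _ _ _ Phi DPhi xbar a lk (dPhi xbar).1 (dPhi xbar).2.
  apply: (@lim_ge _ (fun t => rho * (f xs - f xbar)
      + eta^-1 * (t^-1 * (dotv lk (Phi (t *: a + xbar)) - dotv lk (Phi xbar)))
      + rk * dotv a (xbar - xk)) _ 0 (rk / 2 * dotv a a)).
    apply: cvgD; last exact: cvg_cst.
    apply: cvgD; first exact: cvg_cst.
    by apply: cvgM; [exact: cvg_cst | exact: dd].
  move=> t /andP[t0 t1].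
  set T : {i01 R} := Itv01 (ltW t0) t1.
  have ez : t *: a + xbar = T%:num *: xs + (1 - T%:num) *: xbar.
    by apply/matrixP => i j; rewrite /a /= !mxE; ring.
  have Xz : X (t *: a + xbar).
    rewrite ez; have := cvX xs xbar T (mem_set Xxs) (mem_set Xxbar).
    by rewrite inE.
  have am := argmin _ Xz.
  have cf : f (t *: a + xbar) <= t * f xs + (1 - t) * f xbar.
    rewrite ez; exact: (cvf T xs xbar (mem_set I) (mem_set I)).
  have cf' : rho * f (t *: a + xbar) <= rho * (t * f xs + (1 - t) * f xbar).
    by rewrite ler_pM2l.
  have en : sqnorm (t *: a + xbar - xk) = t * t * dotv a a + 2 * t * dotv a (xbar - xk)
                                      + sqnorm (xbar - xk).
    by rewrite -[t *: a + xbar - xk]addrA sq_exp.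
  rewrite /scaledL en in am.
  rewrite -(pmulr_rge0 _ t0).
  have -> : t * (rho * (f xs - f xbar) + eta^-1 * (t^-1 * (dotv lk (Phi (t *: a + xbar))
       - dotv lk (Phi xbar))) + rk * dotv a (xbar - xk) + rk / 2 * dotv a a * t)
     = t * rho * (f xs - f xbar) + eta^-1 * (dotv lk (Phi (t *: a + xbar))
       - dotv lk (Phi xbar)) + t * rk * dotv a (xbar - xk) + rk / 2 * (t * t) * dotv a a.
    by field; rewrite !gt_eqF.
  nra.
(* dual optimality (first order) *)
have Dl : eta^-1 * dotv b (Phi xbar) - sk * dotv b (lbar - lk) <= 0.
  apply: (@lim_le _ (fun=> eta^-1 * dotv b (Phi xbar) - sk * dotv b (lbar - lk)) _ 0
    (sk / 2 * dotv b b)); first exact: cvg_cst.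
  move=> t /andP[t0 t1].
  have nn : nonneg_orthant (t *: b + lbar).
    move=> i; rewrite /b !mxE; have := ls0 i; have := lbar0 i; nra.
  have am := argmax _ nn; rewrite /scaledL in am.
  have e1 : t *: b + lbar - lk = t *: b + (lbar - lk) by rewrite addrA.
  rewrite e1 sq_exp dotvDl dotvZl in am.
  rewrite -(ler_pM2l t0).
  nra.
have V := VI xbar lbar Xxbar lbar0.
rewrite /ws opp_col_mx add_col_mx dotvZr /Gamma dotv_col dotv_tr dotvNr dotvBl in V.
have C1 := @grad_ineq R n p Phi DPhi xs xbar ls cvP (dPhi xs).1 (dPhi xs).2 ls0.
have C2 := @grad_ineq R n p Phi DPhi xbar xs lbar cvP (dPhi xbar).1 (dPhi xbar).2 lbar0.
rewrite -/D -/a in C2.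
have C1' := ler_wpM2l (ltW ei0) C1.
have C2' := ler_wpM2l (ltW ei0) C2.
have eb : dotv b (Phi xbar) = dotv ls (Phi xbar) - dotv lbar (Phi xbar) by rewrite /b dotvBl.
rewrite eb in Dl.
have Q : 0 <= rk * dotv a (xbar - xk) + sk * dotv b (lbar - lk)
             + eta^-1 * (dotv lk (D *m a) - dotv lbar (D *m a)).
  lra.
have E1 : ws - wk = col_mx (a - (xk - xbar)) (b - (lk - lbar)).
  rewrite /ws /wk opp_col_mx add_col_mx.
  have -> : xs - xk = a - (xk - xbar) by apply/matrixP => i j; rewrite /a !mxE; ring.
  have -> : ls - lk = b - (lk - lbar) by apply/matrixP => i j; rewrite /b !mxE; ring.
  by [].
have E2 : wk - wbar = col_mx (xk - xbar) (lk - lbar).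
  by rewrite /wk /wbar opp_col_mx add_col_mx.
have E3 : ws - wk1 = col_mx (a - (eta * rk)^-1 *: (D^T *m (lk - lbar))) b.
  rewrite /wk1 E2 /Mk mul_block_col !mul1mx mul0mx add0r -scalemxAl.
  rewrite /wk /ws !opp_col_mx !add_col_mx.
  rewrite opp_col_mx add_col_mx.
  set w := D^T *m (lk - lbar).
  have -> : xs - (xk - (xk - xbar + - (eta * rk)^-1 *: w)) = a - (eta * rk)^-1 *: w.
    by apply/matrixP => i j; rewrite /a !mxE; ring.
  have -> : ls - (lk - (lk - lbar)) = b.
    by apply/matrixP => i j; rewrite /b !mxE; ring.
  by [].
rewrite E1 E2 E3 /Hk /Gk !qform_block !qform_scal qform_sub qform_DDt -/D.
have Q' : 0 <= - (rk * dotv a (xk - xbar)) - sk * dotv b (lk - lbar)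
               + eta^-1 * dotv a (D^T *m (lk - lbar)).
  rewrite dotv_tr (dotvBl _ _ (D *m a) lk lbar).
  have -> : dotv a (xk - xbar) = - dotv a (xbar - xk) by rewrite -dotvNr opprB.
  have -> : dotv b (lk - lbar) = - dotv b (lbar - lk) by rewrite -dotvNr opprB.
  lra.
exact: fin_vec.
Qed.
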